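(* Let $V$ be a diagonal $l$-qubit unitary in the third level $\mathcal{C}^{(3)}$ of the Clifford hierarchy and let $|V\rangle=V|+\rangle^{\otimes l}$. Let $S_V=\langle VX_iV^{\dagger}: i\in[l]\rangle$ be the group generated by the operators $VX_iV^\dagger$, and define the twirling map $$\mathcal{T}_V(\rho)=\frac{1}{|S_V|}\sum_{s\in S_V}s\rho s^{\dagger}.$$ Then for any quantum channel $\mathcal{E}$ on $l$ qubits, $$\mathcal{T}_V\circ\mathcal{E}(|V\rangle\langle V|)=\sum_{x\in\mathbb{F}_2^l}p_x\,Z_x|V\rangle\langle V|Z_x^{\dagger}$$ for some probability distribution $\{p_x\}_{x\in\mathbb{F}_2^l}$, where $Z_x=\bigotimes_{i=1}^l Z_i^{x_i}$.
   Context: The $l$-qubit Pauli group $\mathcal{P}_l$ consists of tensor products of $I,X,Y,Z$ times a phase in $\{\pm1,\pm i\}$. The Clifford hierarchy: $\mathcal{C}^{(1)}=\mathcal{P}_l$ and $\mathcal{C}^{(k)}=\{W\in U(2^l): WPW^\dagger\in\mathcal{C}^{(k-1)}\ \forall P\in\mathcal{P}_l\}$ for $k\ge2$. $X_i,Z_i$ denote the Pauli $X,Z$ on qubit $i$, and $|+\rangle=(|0\rangle+|1\rangle)/\sqrt2$. *)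

(* Defs.v *)
From HB Require Import structures.
From mathcomp Require Import all_boot all_order all_algebra.
From mathcomp Require Import reals.
From mathcomp.real_closed Require Import complex mxtens.
Set Implicit Arguments. Unset Strict Implicit. Unset Printing Implicit Defensive.
Import Order.TTheory GRing.Theory Num.Theory.
Local Open Scope ring_scope.

Section Quantum.
Variable R : realType.
Local Notation C := (R[i]).

Definition adj {m n : nat} (A : 'M[C]_(m, n)) : 'M[C]_(n, m) :=
  (map_mx Num.conj A)^T.

Definition unitary {n : nat} (U : 'M[C]_n) : Prop := adj U *m U = 1%:M.

Definition psd {n : nat} (A : 'M[C]_n) : Prop :=
  adj A = A /\ forall v : 'cV[C]_n, 0 <= (adj v *m A *m v) ord0 ord0.

(* id_m (x) E, acting on 'M_(m * n) = 'M_m (x) 'M_n *)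
Definition ampl (m n : nat) (E : 'M[C]_n -> 'M[C]_n) (X : 'M[C]_(m * n))
  : 'M[C]_(m * n) :=
  \sum_(a < m) \sum_(b < m)
     (delta_mx a b : 'M[C]_m) *t
       E (\matrix_(i < n, j < n) X (mxtens_index (a, i)) (mxtens_index (b, j))).

Definition quantum_channel (n : nat) (E : 'M[C]_n -> 'M[C]_n) : Prop :=
  [/\ forall (c : C) (A B : 'M[C]_n), E (c *: A + B) = c *: E A + E B,
      forall (m : nat) (X : 'M[C]_(m * n)), psd X -> psd (ampl E X)
    & forall A : 'M[C]_n, \tr (E A) = \tr A].

(* ---- l-qubit conventions: basis states 'I_(2^l), qubit k <-> bit k ---- *)
Definition bit (l : nat) (k : 'I_l) (i : 'I_(2 ^ l)) : 'I_2 :=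
  inord (odd (i %/ 2 ^ k)).

(* single-qubit Paulis, indexed 0 = I, 1 = X, 2 = Y, 3 = Z *)
Definition sigma (c : 'I_4) : 'M[C]_2 :=
  match val c with
  | 0 => 1%:M
  | 1 => \matrix_(i < 2, j < 2) (i != j)%:R
  | 2 => \matrix_(i < 2, j < 2)
           (if i == j then 0 else if val i == 0%N then - 'i else 'i)
  | _ => \matrix_(i < 2, j < 2) ((i == j)%:R * (-1) ^+ (val i))
  end.

Definition pauli_string (l : nat) (p : {ffun 'I_l -> 'I_4}) : 'M[C]_(2 ^ l) :=
  \matrix_(i, j) \prod_(k < l) sigma (p k) (bit k i) (bit k j).

Definition pauli (l : nat) (P : 'M[C]_(2 ^ l)) : Prop :=
  exists (c : C) (p : {ffun 'I_l -> 'I_4}),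
    (c \in [:: 1; -1; 'i; - 'i]) /\ P = c *: pauli_string p.

(* clifford k W  <->  W \in C^(k.+1) *)
Fixpoint clifford (l : nat) (k : nat) (W : 'M[C]_(2 ^ l)) : Prop :=
  match k with
  | 0 => pauli W
  | k'.+1 => unitary W /\
      forall P : 'M[C]_(2 ^ l), pauli P -> clifford k' (W *m P *m adj W)
  end.

Definition clifford_level (l k : nat) (W : 'M[C]_(2 ^ l)) : Prop :=
  clifford k.-1 W.

Definition Xq (l : nat) (k : 'I_l) : 'M[C]_(2 ^ l) :=
  pauli_string [ffun m => if m == k then (1 : 'I_4) else 0].
Definition Zq (l : nat) (k : 'I_l) : 'M[C]_(2 ^ l) :=
  pauli_string [ffun m => if m == k then (3 : 'I_4) else 0].
Definition Zx (l : nat) (x : {ffun 'I_l -> bool}) : 'M[C]_(2 ^ l) :=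
  pauli_string [ffun m => if x m then (3 : 'I_4) else 0].

Definition plus_state (l : nat) : 'cV[C]_(2 ^ l) :=
  const_mx (real_complex R (Num.sqrt ((2 ^ l)%:R : R))^-1).

Definition ket_V (l : nat) (V : 'M[C]_(2 ^ l)) : 'cV[C]_(2 ^ l) :=
  V *m plus_state l.
Definition proj_V (l : nat) (V : 'M[C]_(2 ^ l)) : 'M[C]_(2 ^ l) :=
  ket_V V *m adj (ket_V V).

Inductive gen_group (n : nat) (G : 'M[C]_n -> Prop) : 'M[C]_n -> Prop :=
| gen_one : gen_group G 1%:M
| gen_mul g M : G g -> gen_group G M -> gen_group G (g *m M)
| gen_inv g M : G g -> gen_group G M -> gen_group G (invmx g *m M).

Definition S_V (l : nat) (V : 'M[C]_(2 ^ l)) : 'M[C]_(2 ^ l) -> Prop :=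
  gen_group (fun g => exists k : 'I_l, g = V *m Xq k *m adj V).

Definition enumerates (n : nat) (S : 'M[C]_n -> Prop) (s : seq 'M[C]_n) : Prop :=
  uniq s /\ forall M, M \in s <-> S M.

Definition twirl (n : nat) (s : seq 'M[C]_n) (rho : 'M[C]_n) : 'M[C]_n :=
  (size s)%:R^-1 *: \sum_(M <- s) (M *m rho *m adj M).

End Quantum.

Arguments Zx {R l} x.
Arguments Zq {R l} k.
Arguments Xq {R l} k.
Arguments plus_state {R} l.
Arguments sigma {R} c.

(* Main.v *)
Require Import Defs.
From HB Require Import structures.
From mathcomp Require Import all_boot all_order all_algebra.
From mathcomp Require Import reals ring.
From mathcomp.real_closed Require Import complex mxtens.
Set Implicit Arguments. Unset Strict Implicit. Unset Printing Implicit Defensive.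
Import Order.TTheory GRing.Theory Num.Theory.
Local Open Scope ring_scope.

Lemma bits_sum (l i : nat) : (i < 2 ^ l)%N -> i = (\sum_(k < l) odd (i %/ 2 ^ k) * 2 ^ k)%N.
Proof.
elim: l i => [|l IH] i Hi.
  by rewrite big_ord0; move: Hi; rewrite expn0; case: i.
rewrite big_ord_recl /= expn0 divn1 muln1.
have Hi2 : (i./2 < 2 ^ l)%N.
  by rewrite -divn2 ltn_divLR // -expnSr.
rewrite {1}(divn_eq i 2) modn2 addnC; congr (_ + _)%N.
rewrite divn2 {1}(IH _ Hi2).
rewrite big_distrl /=; apply: eq_bigr => k _.
rewrite /bump /= add1n expnS -divn2 -divnMA.
by rewrite -mulnA [(2 ^ k * 2)%N]mulnC.
Qed.

Section Q.
Variable R : realType.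
Local Notation C := (R[i]).
Variable l : nat.
Local Notation n := (2 ^ l)%N.
Local Notation BV := {ffun 'I_l -> bool}.

Definition bv (i : 'I_n) : BV := [ffun k : 'I_l => odd (i %/ 2 ^ k)].

Lemma bv_inj : injective bv.
Proof.
move=> i j H; apply: val_inj => /=.
rewrite (bits_sum (ltn_ord i)) (bits_sum (ltn_ord j)).
apply: eq_bigr => k _; by move/ffunP: H => /(_ k); rewrite !ffunE => ->.
Qed.

Lemma bv_bij : bijective bv.
Proof. apply: (inj_card_bij bv_inj); by rewrite card_ffun card_bool !card_ord. Qed.

Definition ib (f : BV) : 'I_n :=
  odflt (Ordinal (expn_gt0 2 l)) [pick i | bv i == f].

Lemma ibK : cancel ib bv.
Proof.
move=> f; rewrite /ib; case: pickP => [i /eqP //|H].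
have [g _ gK] := bv_bij; by move: (H (g f)); rewrite gK eqxx.
Qed.

Lemma bvK : cancel bv ib.
Proof. by move=> i; apply: bv_inj; rewrite ibK. Qed.

Lemma sum_bv (F : 'I_n -> C) : \sum_i F i = \sum_(f : BV) F (ib f).
Proof.
rewrite (reindex ib) //; exists bv => x _; [exact: ibK | exact: bvK].
Qed.

Definition b2 (b : bool) : 'I_2 := inord b.

Lemma bitE (k : 'I_l) (i : 'I_n) : bit k i = b2 (bv i k).
Proof. by rewrite /bit /b2 ffunE. Qed.

Lemma b2_eq b b' : (b2 b == b2 b') = (b == b').
Proof.
by rewrite /b2 -val_eqE /= !inordK //; case: b; case: b'.
Qed.

Lemma sigma0E b b' : sigma (0 : 'I_4) (b2 b) (b2 b') = (b == b')%:R :> C.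
Proof. by rewrite /sigma /= mxE b2_eq. Qed.

Lemma sigma1E b b' : sigma (1 : 'I_4) (b2 b) (b2 b') = (b != b')%:R :> C.
Proof. by rewrite /sigma /= mxE b2_eq. Qed.

Lemma sigma3E b b' : sigma (3 : 'I_4) (b2 b) (b2 b') = (b == b')%:R * (if b then -1 else 1) :> C.
Proof. rewrite /sigma /= mxE b2_eq /b2 inordK; last by case: b.
by case: b. Qed.


Definition ek (k : 'I_l) : BV := [ffun m => m == k].
Definition xr (a b : BV) : BV := [ffun k => a k (+) b k].
Definition Xa (a : BV) : 'M[C]_n := \matrix_(i, j) (bv j == xr (bv i) a)%:R.
Definition sgn (x u : BV) : C := \prod_k (if x k && u k then -1 else 1).

Lemma prod_nat_bool (I : finType) (P : pred I) :
  \prod_(m : I) (P m)%:R = [forall m, P m]%:R :> C.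
Proof.
case: forallP => H.
  by apply: big1 => m _; rewrite H.
have [m Hm] : exists m, ~~ P m.
  apply/existsP; apply: contraT; rewrite negb_exists => /forallP H2.
  by case: H => m; move: (H2 m); rewrite negbK.
by rewrite (bigD1 m) //= (negbTE Hm) mul0r.
Qed.

Lemma Zx_E (x : BV) : Zx x = \matrix_(i, j) ((i == j)%:R * sgn x (bv i)).
Proof.
apply/matrixP => i j; rewrite !mxE.
transitivity (\prod_k ((bv i k == bv j k)%:R * (if x k && bv i k then -1 else 1) : C)).
  apply: eq_bigr => k _; rewrite ffunE !bitE.
  case: (x k); first by rewrite sigma3E.
  by rewrite sigma0E mulr1.
rewrite big_split /= prod_nat_bool; congr (_ * _).
have -> // : [forall m, bv i m == bv j m] = (i == j).
apply/idP/idP => [/forallP H|/eqP ->]; last by apply/forallP.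
by apply/eqP; apply: bv_inj; apply/ffunP => k; exact/eqP.
Qed.

Lemma Xq_E (k : 'I_l) : Xq k = Xa (ek k).
Proof.
apply/matrixP => i j; rewrite !mxE.
transitivity (\prod_m ((bv j m == (bv i m (+) (m == k)))%:R : C)).
  apply: eq_bigr => m _; rewrite ffunE !bitE.
  case: (m == k); first by rewrite sigma1E; case: (bv i m); case: (bv j m).
  by rewrite sigma0E; case: (bv i m); case: (bv j m).
rewrite prod_nat_bool.
have -> // : [forall m, bv j m == bv i m (+) (m == k)] = (bv j == xr (bv i) (ek k)).
apply/idP/idP => [/forallP H|/eqP ->]; first by apply/eqP/ffunP => m; rewrite !ffunE; move: (H m); rewrite !ffunE =>/eqP.
by apply/forallP => m; rewrite !ffunE.
Qed.


Definition z0 : BV := [ffun _ => false].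

Lemma xrC a b : xr a b = xr b a.
Proof. by apply/ffunP => k; rewrite !ffunE addbC. Qed.
Lemma xrA a b c : xr a (xr b c) = xr (xr a b) c.
Proof. by apply/ffunP => k; rewrite !ffunE addbA. Qed.
Lemma xr0 a : xr a z0 = a.
Proof. by apply/ffunP => k; rewrite !ffunE addbF. Qed.
Lemma xr0l a : xr z0 a = a.
Proof. by apply/ffunP => k; rewrite !ffunE. Qed.
Lemma xrK a b : xr (xr a b) b = a.
Proof. by apply/ffunP => k; rewrite !ffunE -addbA addbb addbF. Qed.
Lemma xrKl a b : xr a (xr a b) = b.
Proof. by apply/ffunP => k; rewrite !ffunE addbA addbb. Qed.
Lemma xrii a : xr a a = z0.
Proof. by apply/ffunP => k; rewrite !ffunE addbb. Qed.
Lemma xr_eq a b c : (a == xr b c) = (b == xr a c).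
Proof. by apply/eqP/eqP => ->; rewrite xrK. Qed.

Lemma xr_z0 a b : xr a b = z0 -> a = b.
Proof. by move=> H; rewrite -(xrK a b) H xr0l. Qed.

Lemma Xa_mull (a : BV) (M : 'M[C]_n) i j : (Xa a *m M) i j = M (ib (xr (bv i) a)) j.
Proof.
rewrite mxE (bigD1 (ib (xr (bv i) a))) //= mxE ibK eqxx mul1r big1 ?addr0 // => k Hk.
rewrite mxE; case: eqP => [E|]; last by rewrite mul0r.
by move: Hk; rewrite -E bvK eqxx.
Qed.

Lemma Xa_mulr (a : BV) (M : 'M[C]_n) i j : (M *m Xa a) i j = M i (ib (xr (bv j) a)).
Proof.
rewrite mxE (bigD1 (ib (xr (bv j) a))) //= mxE ibK xr_eq eqxx mulr1 big1 ?addr0 // => k Hk.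
rewrite mxE xr_eq; case: eqP => [E|]; last by rewrite mulr0.
by move: Hk; rewrite -E bvK eqxx.
Qed.

Lemma Xa_mul a c : Xa a *m Xa c = Xa (xr a c).
Proof. by apply/matrixP => i j; rewrite Xa_mull !mxE ibK xrA. Qed.

Lemma Xa0 : Xa z0 = 1%:M.
Proof.
apply/matrixP => i j; rewrite !mxE xr0.
by case: (eqVneq i j) => [->|H]; rewrite ?eqxx // (inj_eq bv_inj) eq_sym (negbTE H).
Qed.

Lemma adj_Xa a : adj (Xa a) = Xa a.
Proof. by apply/matrixP => i j; rewrite !mxE conjC_nat xr_eq. Qed.

Lemma Xa_inj : injective Xa.
Proof.
move=> a c /matrixP /(_ (ib z0) (ib a)); rewrite !mxE !ibK !xr0l eqxx.
case: eqP => [//|_] /eqP. by rewrite /= ?mulr1n ?mulr0n oner_eq0.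
Qed.

Lemma sgn_real x u : sgn x u \is Num.real.
Proof. by apply: rpred_prod => k _; case: ifP => _; rewrite ?rpredN rpred1. Qed.

Lemma sgn_xr x u v : sgn x u * sgn x v = sgn x (xr u v).
Proof.
rewrite /sgn -big_split /=; apply: eq_bigr => k _; rewrite ffunE.
by case: (x k); case: (u k); case: (v k); rewrite /= ?mulrNN ?mulr1 ?mul1r.
Qed.

Lemma sgn_z0 x : sgn x z0 = 1.
Proof. by apply: big1 => k _; rewrite ffunE andbF. Qed.

Lemma sum_sgn w : \sum_x sgn x w = (w == z0)%:R * (2 ^ l)%:R.
Proof.
rewrite /sgn.
rewrite -(bigA_distr_bigA (fun k b => if b && w k then -1 else 1 : C)) /=.
under eq_bigr => k _ do rewrite big_bool /=.
case: eqP => [->|H].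
  rewrite mul1r (eq_bigr (fun _ => 2)); last by move=> k _; rewrite ffunE.
  by rewrite prodr_const card_ord natrX.
have [k Hk] : exists k, w k.
  apply/existsP; apply: contraT; rewrite negb_exists => /forallP H2.
  by case: H; apply/ffunP => k; rewrite ffunE; move: (H2 k); case: (w k).
by rewrite (bigD1 k) //= Hk addNr mul0r mul0r.
Qed.

Lemma Zx_mull x (M : 'M[C]_n) i j : (Zx x *m M) i j = sgn x (bv i) * M i j.
Proof.
rewrite Zx_E mxE (bigD1 i) //= mxE eqxx mul1r big1 ?addr0 // => k Hk.
by rewrite mxE eq_sym (negbTE Hk) mul0r mul0r.
Qed.

Lemma Zx_mulr x (M : 'M[C]_n) i j : (M *m Zx x) i j = M i j * sgn x (bv j).
Proof.
rewrite Zx_E mxE (bigD1 j) //= mxE eqxx mul1r big1 ?addr0 // => k Hk.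
by rewrite mxE (negbTE Hk) mul0r mulr0.
Qed.

Lemma adj_Zx (x : BV) : adj (Zx x : 'M[C]_n) = Zx x.
Proof.
rewrite Zx_E; apply/matrixP => i j; rewrite !mxE.
case: (eqVneq i j) => [->|H]; first by rewrite ?eqxx !mul1r conj_Creal ?sgn_real.
by rewrite ?(negbTE H) !mul0r rmorph0.
Qed.

Lemma Zx_mul (x : BV) : (Zx x : 'M[C]_n) *m Zx x = 1%:M.
Proof.
apply/matrixP => i j; rewrite Zx_mull Zx_E !mxE mulrCA sgn_xr xrii sgn_z0 mulr1.
by [].
Qed.


Definition cst : C := real_complex R (Num.sqrt ((2 ^ l)%:R : R))^-1.
Local Notation pl := (plus_state l : 'cV[C]_n).

Lemma cst_real : cst \is Num.real.
Proof. by apply/complex_realP; eexists. Qed.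

Lemma conj_cst : cst^* = cst.
Proof. exact: conj_Creal cst_real. Qed.

Lemma cst_sq : cst * cst = ((2 ^ l)%:R)^-1.
Proof.
rewrite /cst -rmorphM /= -expr2 exprVn sqr_sqrtr ?ler0n //.
by rewrite fmorphV /= rmorph_nat.
Qed.

Lemma n_neq0 : ((2 ^ l)%:R : C) != 0.
Proof. by rewrite pnatr_eq0 expn_eq0. Qed.

Lemma quad_pl (M : 'M[C]_n) :
  (adj pl *m M *m pl) 0 0 = cst * cst * \sum_k \sum_m M k m.
Proof.
rewrite exchange_big /= mulr_sumr mxE; apply: eq_bigr => m _.
rewrite !mxE mulr_suml mulr_sumr; apply: eq_bigr => k _.
by rewrite !mxE conj_cst; ring.
Qed.

Lemma P_E : pl *m adj pl = const_mx (cst * cst).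
Proof.
apply/matrixP => i j; rewrite !mxE big_ord1 !mxE conj_cst //.
Qed.

Lemma core (B : 'M[C]_n) :
  ((2 ^ l)%:R^-1) *: \sum_a (Xa a *m B *m Xa a) =
  \sum_x ((adj pl *m (Zx x *m B *m Zx x) *m pl) 0 0) *: (Zx x *m (pl *m adj pl) *m Zx x).
Proof.
apply/matrixP => i j.
rewrite !mxE !summxE.
transitivity ((2 ^ l)%:R^-1 * \sum_k B k (ib (xr (xr (bv i) (bv j)) (bv k)))).
  congr (_ * _).
  under eq_bigr => a _ do rewrite Xa_mulr Xa_mull.
  rewrite (reindex_inj (can_inj (xrKl (bv i)))) /= sum_bv.
  apply: eq_bigr => a _; rewrite xrKl ibK.
  by rewrite xrA (xrC (bv j)).
symmetry.
under eq_bigr => x _ do rewrite quad_pl mxE Zx_mulr Zx_mull P_E mxE.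
transitivity (\sum_x \sum_k \sum_m (cst * cst * (cst * cst) * B k m *
     sgn x (xr (xr (bv i) (bv j)) (xr (bv k) (bv m))))).
  apply: eq_bigr => x _.
  rewrite mulr_sumr mulr_suml; apply: eq_bigr => k _.
  rewrite mulr_sumr mulr_suml; apply: eq_bigr => m _.
  rewrite Zx_mulr Zx_mull -!sgn_xr; ring.
rewrite exchange_big mulr_sumr; apply: eq_bigr => k _ /=.
rewrite exchange_big /=.
rewrite (bigD1 (ib (xr (xr (bv i) (bv j)) (bv k)))) //= [X in _ + X]big1 ?addr0.
  rewrite -mulr_sumr sum_sgn ibK (xrC (xr (bv i) (bv j)) (bv k)) xrKl xrii eqxx mul1r.
  rewrite cst_sq; field; exact: n_neq0.
move=> m Hm; rewrite -mulr_sumr sum_sgn.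
suff -> : (xr (xr (bv i) (bv j)) (xr (bv k) (bv m)) == z0) = false by rewrite mul0r mulr0.
apply/negbTE; apply: contra Hm => /eqP H; apply/eqP.
rewrite -[m]bvK; congr ib.
have H2 := xr_z0 H.
by rewrite H2 xrC xrKl.
Qed.


Lemma adj_mul m p q (A : 'M[C]_(m, p)) (B : 'M[C]_(p, q)) : adj (A *m B) = adj B *m adj A.
Proof. by rewrite /adj map_mxM trmx_mul. Qed.

Lemma adjK m p (A : 'M[C]_(m, p)) : adj (adj A) = A.
Proof. by apply/matrixP => i j; rewrite !mxE conjCK. Qed.

Lemma adj1 : adj (1%:M : 'M[C]_n) = 1%:M.
Proof. by apply/matrixP => i j; rewrite !mxE eq_sym; case: (_ == _); rewrite /= ?rmorph1 ?rmorph0. Qed.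

Lemma psd_rank1 m (U : 'cV[C]_m) : psd (U *m adj U).
Proof.
split; first by rewrite adj_mul adjK.
move=> w; rewrite mulmxA -[(_ *m adj U) *m w]mulmxA -[adj U *m w]adjK adj_mul adjK.
set z := adj w *m U.
rewrite [in X in _ <= X]mxE big_ord1.
suff -> : adj z 0 0 = (z 0 0)^* by exact: mul_conjC_ge0.
by rewrite !mxE.
Qed.

Lemma sum_1n (F : 'I_(1 * n) -> C) : \sum_p F p = \sum_(i < n) F (mxtens_index (ord0, i)).
Proof.
rewrite (reindex (@mxtens_index 1 n)) /=; last first.
  by exists (@mxtens_unindex 1 n) => x _; rewrite (mxtens_indexK, mxtens_unindexK).
transitivity (\sum_(i < 1) \sum_(j < n) F (mxtens_index (i, j))); last by rewrite big_ord1.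
by rewrite pair_big /=; apply: eq_bigr => [[i j]] _.
Qed.
Arguments sum_1n : clear implicits.

Lemma chan_pos (E : 'M[C]_n -> 'M[C]_n) : quantum_channel E ->
  forall u v : 'cV[C]_n, 0 <= (adj v *m E (u *m adj u) *m v) 0 0.
Proof.
case => _ Hcp _ u v.
pose U : 'cV[C]_(1 * n) := \col_p u (mxtens_unindex p).2 0.
have [_ Hpos] := Hcp 1%N (U *m adj U) (psd_rank1 U).
pose W : 'cV[C]_(1 * n) := \col_p v (mxtens_unindex p).2 0.
have := Hpos W.
have -> : ampl E (U *m adj U) = (delta_mx 0 0 : 'M[C]_1) *t E (u *m adj u).
  rewrite /ampl !big_ord1; congr (_ *t E _).
  by apply/matrixP => i j; rewrite !mxE !big_ord1 !mxE !mxtens_indexK.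
suff -> : (adj W *m ((delta_mx 0 0 : 'M[C]_1) *t E (u *m adj u)) *m W) 0 0 =
   (adj v *m E (u *m adj u) *m v) 0 0 by [].
rewrite !mxE sum_1n; apply: eq_bigr => j _.
rewrite !mxE sum_1n mxtens_indexK; congr (_ * _).
apply: eq_bigr => i _.
by rewrite !mxE !mxtens_indexK /= mul1r.
Qed.


Definition G (V : 'M[C]_n) (a : BV) : 'M[C]_n := V *m Xa a *m adj V.

Section WithV.
Variable V : 'M[C]_n.
Hypothesis HU : adj V *m V = 1%:M.

Lemma HU' : V *m adj V = 1%:M.
Proof. exact: mulmx1C HU. Qed.

Lemma G_mul a c : G V a *m G V c = G V (xr a c).
Proof.
rewrite /G -!mulmxA (mulmxA (adj V)) HU mul1mx (mulmxA (Xa a)) Xa_mul.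
by rewrite !mulmxA.
Qed.

Lemma G0 : G V z0 = 1%:M.
Proof. by rewrite /G Xa0 mulmx1 HU'. Qed.

Lemma adj_G a : adj (G V a) = G V a.
Proof. by rewrite /G !adj_mul adjK adj_Xa mulmxA. Qed.

Lemma G_inj : injective (G V).
Proof.
move=> a c H.
have E b : adj V *m G V b *m V = Xa b.
  by rewrite /G !mulmxA HU mul1mx -mulmxA HU mulmx1.
by apply: Xa_inj; rewrite -E H E.
Qed.

Lemma invmx_G a : invmx (G V a) = G V a.
Proof.
have H1 : G V a *m G V a = 1%:M by rewrite G_mul xrii G0.
have [Hu _] := mulmx1_unit H1.
by rewrite -[invmx _]mulmx1 -H1 mulmxA mulVmx // mul1mx.
Qed.

Lemma gen_Xq k : V *m Xq k *m adj V = G V (ek k).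
Proof. by rewrite Xq_E. Qed.

Lemma SV_char M : S_V V M <-> exists a, M = G V a.
Proof.
split.
  elim => [|g M0 [k ->] _ [a ->]|g M0 [k ->] _ [a ->]].
  - by exists z0; rewrite G0.
  - by exists (xr (ek k) a); rewrite gen_Xq G_mul.
  - by exists (xr (ek k) a); rewrite gen_Xq invmx_G G_mul.
case => a ->.
suff H : forall s : seq 'I_l, forall b : BV, (forall k, b k -> k \in s) -> S_V V (G V b).
  by apply: (H (enum 'I_l)) => k _; rewrite mem_enum.
elim => [|k s IH] b Hb.
  have -> : b = z0.
    by apply/ffunP => k; rewrite ffunE; apply/negbTE/negP => /Hb.
  rewrite G0; exact: gen_one.
case Hbk: (b k).
  have -> : b = xr (ek k) (xr (ek k) b) by rewrite xrKl.
  rewrite -G_mul; apply: gen_mul; first by exists k; rewrite gen_Xq.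
  apply: IH => m; rewrite !ffunE; case: (eqVneq m k) => [->|Hmk] /=; first by rewrite Hbk.
  by move=> Hbm; move: (Hb m Hbm); rewrite inE (negbTE Hmk).
apply: IH => m Hbm; move: (Hb m Hbm); rewrite inE; case: eqP => // E.
by rewrite E Hbk in Hbm.
Qed.

End WithV.


Lemma Zx_comm (V : 'M[C]_n) (x : BV) : is_diag_mx V -> Zx x *m V = V *m Zx x.
Proof.
move=> /is_diag_mxP HV; apply/matrixP => i j; rewrite Zx_mull Zx_mulr.
case: (eqVneq i j) => [->|H]; first by rewrite mulrC.
by rewrite (HV i j H) mulr0 mul0r.
Qed.

Lemma tr_P : \tr (pl *m adj pl) = 1.
Proof.
rewrite P_E /mxtrace; under eq_bigr => i _ do rewrite mxE.
by rewrite sumr_const card_ord -mulr_natr cst_sq mulVf // n_neq0.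
Qed.

Lemma main_sec (V : 'M[C]_n) : is_diag_mx V -> unitary V ->
  (exists s, enumerates (S_V V) s) /\
  forall (s : seq 'M[C]_n), enumerates (S_V V) s ->
  forall E : 'M[C]_n -> 'M[C]_n, quantum_channel E ->
  exists p : {ffun BV -> R},
    [/\ forall x, 0 <= p x, \sum_x p x = 1 &
        twirl s (E (proj_V V)) =
        \sum_x real_complex R (p x) *: (Zx x *m proj_V V *m adj (Zx x))].
Proof.
move=> HD HU.
have memG M : (M \in map (G V) (enum BV)) <-> S_V V M.
  split; first by case/mapP => a _ ->; apply/(SV_char HU); exists a.
  by case/(SV_char HU) => a ->; apply: map_f; rewrite mem_enum.
split.
  exists (map (G V) (enum BV)); split => //.
  by rewrite map_inj_uniq ?enum_uniq //; exact: G_inj.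
move=> s [Hus Hs] E HE.
set A := E (proj_V V).
set B := adj V *m A *m V.
pose q x := (adj pl *m (Zx x *m B *m Zx x) *m pl) 0 0.
have Hq x : q x = (adj (V *m Zx x *m pl) *m A *m (V *m Zx x *m pl)) 0 0.
  by rewrite /q /B !adj_mul adj_Zx !mulmxA.
have q_ge0 x : 0 <= q x by rewrite Hq; exact: (chan_pos HE (ket_V V)).
have qE x : q x = real_complex R (complex.Re (q x)).
  by rewrite RRe_real // ger0_real.
have HU' := HU' HU.
exists [ffun x => complex.Re (q x)].
have sumq : \sum_x q x = 1.
  have Hc := congr1 mxtrace (core B).
  move: Hc; rewrite mxtraceZ !raddf_sum /=.
  under eq_bigr => a _ do rewrite mxtrace_mulC mulmxA Xa_mul xrii Xa0 mul1mx.
  have trZ x : \tr (Zx x *m (pl *m adj pl) *m Zx x) = 1.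
    by rewrite mxtrace_mulC (mulmxA (Zx x) (Zx x)) Zx_mul mul1mx tr_P.
  under [X in _ = X]eq_bigr => x _ do rewrite mxtraceZ trZ mulr1.
  move=> <-.
  rewrite sumr_const card_ffun card_bool card_ord -[\tr B *+ _]mulr_natr mulrCA mulVf ?n_neq0 // mulr1.
  rewrite /B mxtrace_mulC mulmxA HU' mul1mx.
  case: HE => _ _ ->.
  rewrite /proj_V mxtrace_mulC /mxtrace big_ord1 /ket_V adj_mul.
  rewrite -mulmxA (mulmxA (adj V)) HU mul1mx mxE.
  under eq_bigr => i _ do rewrite !mxE conj_cst.
rewrite -/cst.   by rewrite sumr_const card_ord -mulr_natr cst_sq mulVf // n_neq0.
split.
- by move=> x; rewrite ffunE -ler0c -qE.
- apply: complexI; rewrite rmorph_sum rmorph1 /= -sumq.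
  by apply: eq_bigr => x _; rewrite ffunE -qE.
have Hperm : perm_eq s (map (G V) (enum BV)).
  apply: uniq_perm => //; first by rewrite map_inj_uniq ?enum_uniq //; exact: G_inj.
  move=> M; apply/idP/idP => H.
    by apply/memG/Hs.
  by apply/Hs/memG.
rewrite /twirl (perm_big _ Hperm) (perm_size Hperm) size_map -cardE card_ffun card_bool card_ord.
rewrite big_map big_enum /=.
transitivity (V *m (((2 ^ l)%:R)^-1 *: \sum_a (Xa a *m B *m Xa a)) *m adj V).
  rewrite -scalemxAr -scalemxAl mulmx_sumr mulmx_suml; congr (_ *: _).
  apply: eq_bigr => a _; rewrite adj_G /G /B !mulmxA //.
rewrite core mulmx_sumr mulmx_suml; apply: eq_bigr => x _.
rewrite ffunE -qE -scalemxAr -scalemxAl; congr (_ *: _).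
have HZ' : adj V *m Zx x = Zx x *m adj V.
  have : adj (Zx x *m V) = adj (V *m Zx x) by rewrite (Zx_comm x HD).
  by rewrite !adj_mul adj_Zx.
rewrite /proj_V /ket_V adj_mul adj_Zx !mulmxA (Zx_comm x HD).
by rewrite -!mulmxA HZ'.
Qed.

End Q.

Unset Implicit Arguments.

Theorem proposition5 (R : realType) (l : nat) (V : 'M[R[i]]_(2 ^ l)) :
  is_diag_mx V -> clifford_level 3 V ->
  (exists s, enumerates (S_V V) s) /\
  forall (s : seq 'M[R[i]]_(2 ^ l)), enumerates (S_V V) s ->
  forall E : 'M[R[i]]_(2 ^ l) -> 'M[R[i]]_(2 ^ l), quantum_channel E ->
  exists p : {ffun {ffun 'I_l -> bool} -> R},
    [/\ forall x, 0 <= p x, \sum_x p x = 1 &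
        twirl s (E (proj_V V)) =
        \sum_x real_complex R (p x) *: (Zx x *m proj_V V *m adj (Zx x))].
Proof.
move=> HD Hcl; apply: main_sec => //.
by case: Hcl.
Qed.
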